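(* Let $p$ be a prime, $0<\alpha\le1$, $k$ a positive integer, and let $S\subseteq\mathbb{Z}_p$ be such that all $k$-wise sums of different elements of $S$ are distinct, excluding permutations of the summands (i.e., for any two $k$-element subsets $T,T'\subseteq S$, $\sum_{t\in T}t=\sum_{t\in T'}t$ in $\mathbb{Z}_p$ implies $T=T'$). Then $$\mathcal{C}^{\mathrm{bsgs1}}_\alpha(S)>\left(\alpha|S|/(2k)\right)^{k/(k+1)}.$$
   Context: The BSGS-1 $\alpha$-complexity $\mathcal{C}^{\mathrm{bsgs1}}_\alpha(S)$ of $S\subseteq\mathbb{Z}_p$ is the smallest integer $n$ such that there exist $X,Y\subseteq\mathbb{Z}_p$ with $|X|=|Y|=n$ and $|S\cap(X-Y)|\geq\alpha|S|$, where $X-Y=\{x-y\mid x\in X,y\in Y\}$ (computed in $\mathbb{Z}_p$). *)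

(* Defs.v *)
From mathcomp Require Import all_boot all_order all_algebra.
From mathcomp Require Import all_classical all_reals all_analysis.
Set Implicit Arguments. Unset Strict Implicit. Unset Printing Implicit Defensive.
Import GRing.Theory Num.Theory.
Local Open Scope ring_scope.

Definition diffset (p : nat) (X Y : {set 'F_p}) : {set 'F_p} :=
  [set x - y | x in X, y in Y].

Definition bsgs1_ok (R : realType) (p : nat) (alpha : R) (S : {set 'F_p}) (n : nat) : bool :=
  [exists X : {set 'F_p}, exists Y : {set 'F_p},
     [&& #|X| == n, #|Y| == n &
         alpha * (#|S|)%:R <= (#|S :&: diffset X Y|)%:R]].

Lemma bsgs1_ok_exists (R : realType) (p : nat) (alpha : R) (S : {set 'F_p}) :
  alpha <= 1 -> exists n, bsgs1_ok alpha S n.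
Proof.
move=> a1; exists #|[set: 'F_p]%SET|; apply/existsP; exists [set: 'F_p]%SET; apply/existsP; exists [set: 'F_p]%SET.
rewrite !eqxx /=.
have -> : S :&: diffset [set: 'F_p]%SET [set: 'F_p]%SET = S.
  apply/setP => z; rewrite inE; case: (z \in S) => //=.
  by apply/imset2P; exists z 0; rewrite ?inE // subr0.
by rewrite -[X in _ <= X]mul1r ler_wpM2r.
Qed.

Definition bsgs1_complexity (R : realType) (p : nat) (alpha : R) (S : {set 'F_p})
  (a1 : alpha <= 1) : nat :=
  ex_minn (bsgs1_ok_exists S a1).

Definition distinct_ksums (p : nat) (k : nat) (S : {set 'F_p}) : Prop :=
  forall T T' : {set 'F_p}, T \subset S -> T' \subset S -> #|T| = k -> #|T'| = k ->
    \sum_(t in T) t = \sum_(t in T') t -> T = T'.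

(* Main.v *)
Require Import Defs.
From mathcomp Require Import all_boot all_order all_algebra.
From mathcomp Require Import all_classical all_reals all_analysis.
From mathcomp Require Import zify ring.
Import GRing.Theory Num.Theory.
Set Implicit Arguments. Unset Strict Implicit. Unset Printing Implicit Defensive.
Local Notation subsetP := fintype.subsetP.
Local Notation inE := finset.inE.
Local Notation subset_trans := fintype.subset_trans.
Local Notation subUset := finset.subUset.
Local Notation setX := finset.setX.

Lemma sum_bool_card (I : finType) (A : {set I}) (b : pred I) :
  \sum_(i in A) (b i : nat) = #|[set i in A | b i]|.
Proof.
rewrite -sum1_card [RHS](eq_bigl (fun i => (i \in A) && b i)); last by move=> i; rewrite inE.
rewrite big_mkcondr /=; apply: eq_bigr => i _; by case: (b i).
Qed.

Lemma arith k n m dl : 0 < k -> 0 < n -> m <= n * n -> m <= n.*2 * dl ->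
  dl.-1 ^ k <= n -> (k.*2) ^ k * n ^ k.+1 <= m ^ k -> False.
Proof.
move=> k0 n0 mn mdl hdl h.
have h1 : (k.*2) ^ k * n ^ k.+1 <= (n.*2 * dl) ^ k.
  by apply: leq_trans h _; rewrite leq_exp2r.
have h2 : k ^ k * n <= dl ^ k.
  move: h1; rewrite -!mul2n !expnMn expnSr.
  have -> : 2 ^ k * k ^ k * (n ^ k * n) = (2 ^ k * n ^ k) * (k ^ k * n) by ring.
  by rewrite leq_pmul2l // muln_gt0 !expn_gt0 n0.
have kk : k <= k ^ k by rewrite -{1}(expn1 k) leq_pexp2l.
case: (leqP dl 1) => hdl1.
  have : dl ^ k <= 1 by case: dl hdl1 {mdl hdl h1 h2} => [|[|]] //; rewrite ?exp0n ?exp1n.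
  move=> hd1.
  have hk1 : k = 1 by have := leq_trans h2 hd1; nia.
  have hn1 : n = 1 by have := leq_trans h2 hd1; nia.
  by subst; move: h; rewrite !expn1; nia.
have h3 : dl ^ k <= 2 ^ k * n.
  apply: (leq_trans (_ : _ <= (2 * dl.-1) ^ k)).
    by rewrite leq_exp2r //; lia.
  by rewrite expnMn leq_mul2l hdl orbT.
have h4 : k ^ k <= 2 ^ k.
  by have := leq_trans h2 h3; rewrite leq_pmul2r.
have k2 : k <= 2 by move: h4; rewrite leq_exp2r.
case: k k0 k2 {kk h4 h1 h3} h h2 hdl => [|[|[|]]] // _ _.
  by rewrite !expn1 => h _ _; nia.
rewrite !expnS !expn0 !muln1 => h h2 hdl.
have : dl.-1 * dl.-1 * 4 <= dl * dl by nia.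
move=> h5.
have hd2 : dl = 2 by nia.
subst dl; have : n = 1 by nia.
move=> hn; subst n; nia.
Qed.

Section Graph.
Variable T : finZmodType.
Variable E : {set T * T}.
Local Notation V := (bool * T)%type.
Definition ed (u w : V) : T * T := if u.1 then (w.2, u.2) else (u.2, w.2).
Definition adj (u w : V) : bool := (u.1 != w.1) && (ed u w \in E).
Definition dd (e : T * T) : T := (e.1 - e.2)%R.

Lemma adj_sym u w : adj u w = adj w u.
Proof.
by case: u w => [[] x] [[] y]; rewrite /adj /ed.
Qed.

Lemma adj_side u w : adj u w -> w.1 = ~~ u.1.
Proof. by case: u w => [[] x] [[] y]; rewrite /adj. Qed.

Lemma ed_eq u w u' w' : adj u w -> adj u' w' -> ed u w = ed u' w' ->
  (u = u' /\ w = w') \/ (u = w' /\ w = u').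
Proof.
case: u w u' w' => [[] x] [[] y] [[] x'] [[] y']; rewrite /adj /ed //= => _ _ [-> ->]; auto.
Qed.

Lemma step_val u w : adj u w -> (u.2 - w.2 = if u.1 then - dd (ed u w) else dd (ed u w))%R.
Proof. by case: u w => [[] x] [[] y]; rewrite /adj /ed /dd //= => _; rewrite opprB. Qed.

Variable k : nat.
Hypothesis nocyc : forall h (c : nat -> T * T), (2 <= h <= k)%N ->
  (forall t, t < h.*2 -> c t \in E) ->
  (forall t u, t < h.*2 -> u < h.*2 -> c t = c u -> t = u) ->
  (\sum_(r < h) dd (c r.*2) = \sum_(r < h) dd (c r.*2.+1))%R -> False.

Lemma side_walk (f : nat -> V) L : (forall t, t < L -> adj (f t) (f t.+1)) ->
  forall t, t <= L -> (f t).1 = (f 0).1 (+) odd t.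
Proof.
move=> ha; elim=> [|t IH] ht; first by rewrite addbF.
rewrite (adj_side (ha t ht)) IH ?(ltnW ht) //=.
by case: (f 0).1; case: (odd t).
Qed.

Lemma no_closed (f : nat -> V) L : 0 < L -> L <= k.*2 ->
  (forall t, t < L -> adj (f t) (f t.+1)) ->
  (forall t, t.+2 <= L -> f t != f t.+2) -> f 0 = f L -> False.
Proof.
move=> L0 Lk ha hnb hcl.
pose P g := (0 < g) && [exists i : 'I_L.+1, (i + g <= L) && (f i == f (i + g))].
have exP : exists g, P g.
  exists L; rewrite /P L0 /=; apply/existsP; exists ord0 => /=.
  by rewrite add0n leqnn hcl eqxx.
case: (ex_minnP exP) => g /andP [g0 /existsP [[i /= _] /andP [hiL /eqP hfi]]] gmin.
have hside := side_walk ha.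
have godd : ~~ odd g.
  have := hside i (leq_trans (leq_addr _ _) hiL).
  rewrite hfi hside // oddD.
  by case: (f 0).1; case: (odd i); case: (odd g).
have hdist : forall t u, i <= t -> t < u -> u < i + g -> f t != f u.
  move=> t u h1 h2 h3; apply/negP => /eqP htu.
  have : P (u - t).
    rewrite /P subn_gt0 h2 /=; apply/existsP.
    have tL : t < L.+1 by lia.
    exists (Ordinal tL) => /=.
    rewrite subnKC ?(ltnW h2) // htu eqxx andbT; lia.
  move/gmin; lia.
have g2 : g != 2.
  apply/eqP=> g2; have hi2 : i.+2 <= L by rewrite -addn2 -g2.
  by move: (hnb i hi2); rewrite hfi g2 addn2 eqxx.
have hh : exists h, g = h.*2.
  exists g./2; by rewrite -{1}(odd_double_half g) (negbTE godd).
case: hh => h gh.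
pose c t := ed (f (i + t)) (f (i + t).+1).
apply: (nocyc (h := h) (c := c)).
- apply/andP; split; lia.
- move=> t ht; rewrite /c; have := ha (i + t); rewrite /adj => /(_ _) /andP [] //; lia.
- move=> t u ht hu hc.
  wlog tu : t u ht hu hc / t <= u.
    move=> W; case: (leqP t u) => htu; first exact: W.
    by symmetry; apply: W => //; apply: ltnW.
  move: tu; rewrite leq_eqVlt => /orP [/eqP // | tu].
  have a1 : adj (f (i + t)) (f (i + t).+1) by apply: ha; lia.
  have a2 : adj (f (i + u)) (f (i + u).+1) by apply: ha; lia.
  case: (ed_eq a1 a2 hc) => [[e1 _] | [e1 e2]].
    by move: (hdist (i + t) (i + u)) => /(_ _ _ _) /negP; case; try lia; rewrite e1.
  case: (ltngtP t.+1 u) => tu1.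
  + by move: (hdist (i + t).+1 (i + u)) => /(_ _ _ _) /negP; case; try lia; rewrite e2.
  + lia.
  + move: (hnb (i + t)) => /(_ _) /negP; case; first lia.
    by rewrite e1 -tu1 addnS.
- have [s hs0] : {s | (f i).1 = s} by exists (f i).1.
  pose F r := (f (i + r.*2)).2.
  have sideE : forall r, r < h -> (f (i + r.*2)).1 = s.
    move=> r hr; rewrite -hs0 (hside (i + r.*2)); last lia.
    rewrite (hside i); last lia.
    by rewrite oddD odd_double addbF.
  have key : forall r, r < h -> (F r - F r.+1 = if s then dd (c r.*2.+1) - dd (c r.*2)
                                  else dd (c r.*2) - dd (c r.*2.+1))%R.
    move=> r hr.
    have a1 : adj (f (i + r.*2)) (f (i + r.*2).+1) by apply: ha; lia.
    have a2 : adj (f (i + r.*2).+1) (f (i + r.*2).+2) by apply: ha; lia.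
    have -> : (F r - F r.+1 = ((f (i + r.*2)).2 - (f (i + r.*2).+1).2)
                  + ((f (i + r.*2).+1).2 - (f (i + r.*2).+2).2))%R.
      by rewrite addrA subrK /F doubleS !addnS.
    rewrite (step_val a1) (step_val a2) (adj_side a1) sideE // /c !addnS.
    by case: s {hs0 sideE} => /=; rewrite ?opprK // addrC.
  have tel : (\sum_(0 <= r < h) (F r - F r.+1) = 0)%R.
    rewrite (telescope_sumr_eq (fun r => (- F r)%R)) ?leq0n //.
      rewrite /F -gh /= addn0 -hfi opprK addrC; exact: subrr.
    by move=> r _; rewrite opprK addrC.
  rewrite (eq_big_nat _ _ (F2 := fun r => if s then dd (c r.*2.+1) - dd (c r.*2)
                                  else dd (c r.*2) - dd (c r.*2.+1))%R) in tel; last first.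
    by move=> r /andP [_ hr]; rewrite key.
  rewrite big_mkord in tel.
  by case: s {hs0 sideE key} tel; rewrite sumrB => /eqP; rewrite subr_eq0 => /eqP.
Qed.

Lemma walk_uniq (w w' : nat -> V) l : l <= k ->
  (forall t, t < l -> adj (w t) (w t.+1)) ->
  (forall t, t < l -> adj (w' t) (w' t.+1)) ->
  (forall t, t.+2 <= l -> w t != w t.+2) ->
  (forall t, t.+2 <= l -> w' t != w' t.+2) ->
  w 0 = w' 0 -> w l = w' l -> forall t, t <= l -> w t = w' t.
Proof.
move=> lk ha ha' hn hn' h0 hl t0 ht0.
apply/eqP; apply/negPn/negP => hne.
pose P t := (t <= l) && (w t != w' t).
have exP : exists t, P t by exists t0; rewrite /P ht0.
have ubP : forall t, P t -> t <= l by move=> t /andP [].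
case: (ex_minnP exP) => i0 /andP [i0l /eqP i0ne] i0min.
case: (ex_maxnP exP ubP) => i1 /andP [i1l /eqP i1ne] i1max.
have i0pos : 0 < i0 by case: i0 i0ne {i0l i0min} => //.
have i1lt : i1 < l by rewrite ltn_neqAle i1l andbT; apply/eqP => e; apply: i1ne; rewrite e.
have i01 : i0 <= i1 by apply: i0min; rewrite /P i1l; apply/eqP.
have before : forall t, t < i0 -> w t = w' t.
  move=> t ht; apply/eqP; apply/negPn/negP => hn0.
  have : P t by rewrite /P hn0 andbT; lia.
  move/i0min; lia.
have after : forall t, i1 < t -> t <= l -> w t = w' t.
  move=> t ht htl; apply/eqP; apply/negPn/negP => hn0.
  have : P t by rewrite /P hn0 andbT.
  move/i1max; lia.
pose j := i0.-1.
pose M := i1.+1 - j.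
pose c t := if t < M then w (j + t) else w' (j + (M.*2 - t)).
have cE1 : forall t, t <= M -> c t = w (j + t).
  move=> t ht; rewrite /c; case: ltnP => // hMt.
  have -> : t = M by lia.
  have -> : j + (M.*2 - M) = j + M by lia.
  by symmetry; apply: after; lia.
have cE2 : forall t, M <= t -> c t = w' (j + (M.*2 - t)).
  by move=> t ht; rewrite /c ltnNge ht.
apply: (no_closed (f := c) (L := M.*2)).
- lia.
- lia.
- move=> t ht.
  case: (ltngtP t M) => htM.
  + rewrite !cE1; try lia; rewrite addnS; apply: ha; lia.
  + rewrite !cE2; try lia.
    have -> : j + (M.*2 - t) = (j + (M.*2 - t.+1)).+1 by lia.
    rewrite adj_sym; apply: ha'; lia.
  + rewrite cE1 ?htM // cE2; last lia.
    have -> : j + (M.*2 - M.+1) = i1 by lia.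
    have -> : j + M = i1.+1 by lia.
    rewrite (after i1.+1) // adj_sym; exact: ha'.
- move=> t ht.
  case: (ltngtP t.+1 M) => htM.
  + rewrite !cE1; try lia; rewrite !addnS; apply: hn; lia.
  + rewrite !cE2; try lia.
    have -> : j + (M.*2 - t) = (j + (M.*2 - t.+2)).+2 by lia.
    by rewrite eq_sym; apply: hn'; lia.
  + rewrite cE1; last lia. rewrite cE2; last lia.
    have -> : j + t = i1 by lia.
    have -> : j + (M.*2 - t.+2) = i1 by lia.
    by apply/eqP.
- rewrite cE1 // cE2; last lia.
  have -> : j + (M.*2 - M.*2) = j by lia.
  rewrite addn0; apply: before; lia.
Qed.

Fixpoint wk (ch : V -> V -> nat -> V) (v0 : V) (tau : nat -> nat) t : V * V :=
  if t is t'.+1 then let q := wk ch v0 tau t' in (q.2, ch q.2 q.1 (tau t')) else (v0, v0).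

Variables X Y : {set T}.
Definition Vall : {set V} := [set v : V | if v.1 then v.2 \in Y else v.2 \in X].

Lemma card_side b : #|[set v in Vall | v.1 == b]| = #|if b then Y else X|.
Proof.
have -> : [set v in Vall | v.1 == b] = (pair b) @: (if b then Y else X).
  apply/setP => -[b' x]; rewrite !inE /=.
  apply/idP/imsetP => [/andP [hx /eqP e] | [y hy [-> ->]]].
    by move: hx; rewrite e => hx; exists x => //; case: (b) hx.
  by rewrite eqxx andbT; move: hy; case: (b).
by apply: card_imset => x y [].
Qed.

Lemma card_Vall : #|Vall| = #|X| + #|Y|.
Proof.
rewrite -(cardsID [set v : V | v.1] Vall) -(card_side true) -(card_side false) addnC.
by congr (_ + _); apply: eq_card => v; rewrite !inE; case: v.1; rewrite ?andbT ?andbF.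
Qed.

Lemma count_walks (W : {set V}) (dl : nat) v0 : 0 < k -> v0 \in W ->
  (forall u, u \in W -> dl <= #|[set w in W | adj u w]|) -> W \subset Vall ->
  dl.-1 ^ k <= #|[set v in Vall | v.1 == v0.1 (+) odd k]|.
Proof.
move=> k0 v0W hdeg WV.
case: (posnP dl.-1) => [-> | dl0]; first by rewrite exp0n.
pose Nb u pr := [set w in W | adj u w & w != pr].
have hNb : forall u pr, u \in W -> dl.-1 <= #|Nb u pr|.
  move=> u pr uW.
  have : #|[set w in W | adj u w]| <= (#|Nb u pr|).+1.
    apply: leq_trans (_ : #|pr |: Nb u pr| <= _).
      apply: subset_leq_card; apply/subsetP => w; rewrite !inE => /andP [wW auw].
      by case: (w =P pr) => //= _; rewrite wW auw.
    by rewrite cardsU1; case: (pr \notin _).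
  move: (hdeg u uW); lia.
pose ch u pr j := nth v0 (enum (Nb u pr)) j.
have hch : forall u pr j, u \in W -> j < dl.-1 -> ch u pr j \in Nb u pr.
  move=> u pr j uW hj; rewrite /ch -mem_enum; apply: mem_nth.
  by rewrite -cardE; apply: leq_trans (hNb u pr uW).
pose tf (f : {ffun 'I_k -> 'I_dl.-1}) t := if insub t is Some i then nat_of_ord (f i) else 0.
have tfb : forall f t, tf f t < dl.-1.
  by move=> f t; rewrite /tf; case: insub => //= i; exact: ltn_ord.
pose wv f t := (wk ch v0 (tf f) t).2.
have wvW : forall f t, wv f t \in W.
  move=> f; elim=> [|t IH] //=.
  by have := hch _ ((wk ch v0 (tf f) t).1) _ IH (tfb f t); rewrite inE => /andP [].
have wvadj : forall f t, adj (wv f t) (wv f t.+1).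
  move=> f t; have := hch _ ((wk ch v0 (tf f) t).1) _ (wvW f t) (tfb f t).
  by rewrite inE => /and3P [].
have wvnb : forall f t, wv f t != wv f t.+2.
  move=> f t; have := hch _ ((wk ch v0 (tf f) t.+1).1) _ (wvW f t.+1) (tfb f t.+1).
  by rewrite inE eq_sym => /and3P [].
pose g f := wv f k.
have ginj : injective g.
  move=> f f' hg.
  have heq := walk_uniq (w := wv f) (w' := wv f') (l := k) (leqnn k)
    (fun t _ => wvadj f t) (fun t _ => wvadj f' t)
    (fun t _ => wvnb f t) (fun t _ => wvnb f' t) erefl hg.
  have hwk : forall t, t <= k -> wk ch v0 (tf f) t = wk ch v0 (tf f') t.
    case=> [|t] ht //=; congr (_, _); first exact: heq (ltnW ht).
    exact: (heq t.+1 ht).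
  apply/ffunP => i; apply: val_inj => /=.
  have ht : i < k by exact: ltn_ord.
  have := heq i.+1 ht; rewrite /wv /= (hwk i (ltnW ht)) /ch.
  set u := (wk ch v0 (tf f') i).
  have uW : u.2 \in W by exact: (wvW f' i).
  have hb : forall f0, tf f0 i < size (enum (Nb u.2 u.1)).
    by move=> f0; rewrite -cardE; exact: (leq_trans (tfb _ _) (hNb _ _ uW)).
  move/eqP; rewrite nth_uniq ?enum_uniq ?hb // /tf valK => /eqP e.
  by [].
have <- : #|[set g f | f in [set: {ffun 'I_k -> 'I_dl.-1}]]| = dl.-1 ^ k.
  by rewrite card_imset // cardsT card_ffun !card_ord.
apply: subset_leq_card; apply/subsetP => v /imsetP [f _ ->].
rewrite inE (subsetP WV _ (wvW f k)) /=.
rewrite /g (side_walk (f := wv f) (L := k) (fun t _ => wvadj f t)) //.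
Qed.

Definition deg (W : {set V}) u := #|[set w in W | adj u w]|.
Definition Dsum (W : {set V}) := \sum_(u in W) deg W u.

Lemma adj_irr u : adj u u = false.
Proof. by rewrite /adj eqxx. Qed.

Lemma Drem (W : {set V}) u : u \in W -> Dsum W = Dsum (W :\ u) + (deg W u).*2.
Proof.
move=> uW; rewrite /Dsum (big_setD1 _ uW) /=.
have h1 : forall v, v \in W :\ u -> deg W v = deg (W :\ u) v + adj v u.
  move=> v; rewrite in_setD1 => /andP [vu vW].
  rewrite /deg (cardsD1 u) addnC inE uW /=; congr (_ + _).
  by apply: eq_card => w; rewrite !inE andbA.
rewrite (eq_bigr _ h1) big_split /= sum_bool_card.
have -> : #|[set v in W :\ u | adj v u]| = deg W u.
  rewrite /deg; apply: eq_card => w; rewrite !inE adj_sym.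
  by case: (w =P u) => [->|]; rewrite ?adj_irr ?andbF.
by rewrite -addnn; lia.
Qed.

Lemma prune (W0 : {set V}) dl : (dl.-1 * #|W0|).*2 < Dsum W0 ->
  exists W : {set V}, [/\ W \subset W0, exists v0, v0 \in W & forall u, u \in W -> dl <= deg W u].
Proof.
move=> h0.
pose P s := [exists W : {set V}, [&& W \subset W0, #|W| == s & (dl.-1 * #|W|).*2 < Dsum W]].
have exP : exists s, P s by exists #|W0|; apply/existsP; exists W0; rewrite subxx eqxx h0.
case: (ex_minnP exP) => s /existsP [W /and3P [WW0 /eqP Ws hW]] smin.
exists W; split => //.
  case: (set_0Vmem W) => [W0e | [v0 v0W]]; last by exists v0.
  by move: hW; rewrite W0e /Dsum big_set0.
move=> u uW; rewrite leqNgt; apply/negP => hlt.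
have : P #|W :\ u|.
  apply/existsP; exists (W :\ u); rewrite eqxx /=.
  rewrite (subset_trans (subsetDl _ _) WW0) /=.
  move: hW; rewrite (Drem uW) (cardsD1 u W) uW.
  have : deg W u <= dl.-1 by lia.
  move: (Dsum _) (deg W u) #|W :\ u| => a b c; nia.
move/smin; rewrite -Ws (cardsD1 u W) uW; lia.
Qed.

Lemma Dsum_Vall : E \subset setX X Y -> (#|E|).*2 <= Dsum Vall.
Proof.
move=> EXY.
pose inc (u : V) (e : T * T) := if u.1 then e.2 == u.2 else e.1 == u.2.
pose oth (u : V) (e : T * T) : V := if u.1 then (false, e.1) else (true, e.2).
have h1 : forall u, u \in Vall -> \sum_(e in E) (inc u e : nat) <= deg Vall u.
  move=> u uV; rewrite sum_bool_card.
  rewrite -(@card_in_imset _ _ (oth u)).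
    apply: subset_leq_card; apply/subsetP => v /imsetP [e]; rewrite inE => /andP [eE ie] ->.
    have := subsetP EXY e eE; rewrite inE => /andP [ex ey].
    move: ie; rewrite /inc /oth !inE /adj /ed; case: u uV => [[] x] /= _ /eqP <-;
      by rewrite ?ex ?ey -?surjective_pairing eE.
  move=> [a b] [a' b']; rewrite !inE /inc /oth => /andP [_ ie] /andP [_ ie'].
  by case: u {uV} ie ie' => [[] x] /= /eqP -> /eqP -> [] ->.
have h2 : forall e, e \in E -> \sum_(u in Vall) (inc u e : nat) = 2.
  move=> e eE; rewrite sum_bool_card.
  have := subsetP EXY e eE; rewrite inE => /andP [ex ey].
  have -> : [set u in Vall | inc u e] = [set (false, e.1); (true, e.2)].
    apply/setP => -[[] x]; rewrite !inE /inc /= ?ex ?ey /=.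
      by rewrite !xpair_eqE /= eq_sym; case: (x =P e.2) => [->|]; rewrite ?ey ?andbF.
    by rewrite !xpair_eqE /= orbF eq_sym; case: (x =P e.1) => [->|]; rewrite ?ex ?andbF.
  by rewrite cards2.
apply: (@leq_trans (\sum_(u in Vall) \sum_(e in E) (inc u e : nat))).
  rewrite exchange_big /= (eq_bigr (fun _ => 2)); last by move=> e; exact: h2.
  by rewrite sum_nat_const muln2.
by apply: leq_sum => u uV; exact: h1.
Qed.

Lemma graph_bound n : 0 < k -> #|X| = n -> #|Y| = n -> E \subset setX X Y -> 0 < #|E| ->
  #|E| ^ k < (k.*2) ^ k * n ^ k.+1.
Proof.
move=> k0 Xn Yn EXY E0.
rewrite ltnNge; apply/negP => hc.
set m := #|E| in E0 hc.
have mn : m <= n * n by rewrite /m; have := subset_leq_card EXY; rewrite cardsX Xn Yn.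
have n0 : 0 < n by case: n mn Xn Yn {hc} => //; rewrite muln0; lia.
pose dl := (m.-1 %/ n.*2).+1.
have d0 : 0 < n.*2 by rewrite double_gt0.
have hlow : n.*2 * dl.-1 < m.
  rewrite /dl /= mulnC; apply: leq_ltn_trans (leq_divM _ _) _; lia.
have hup : m <= n.*2 * dl.
  rewrite /dl mulnC; have := ltn_ceil m.-1 d0; lia.
have hD : (dl.-1 * #|Vall|).*2 < Dsum Vall.
  apply: leq_trans (Dsum_Vall EXY); rewrite card_Vall Xn Yn addnn -doubleMr ltn_double mulnC; move: hlow; rewrite /m; lia.
case: (prune hD) => W [WV [v0 v0W] hdeg].
have := count_walks k0 v0W hdeg WV; rewrite card_side.
have -> : #|if v0.1 (+) odd k then Y else X| = n by case: (_ (+) _).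
move=> hcount.
exact: (arith k0 n0 mn hup hcount hc).
Qed.

End Graph.

Lemma sub_card_exists (T : finType) (R : {set T}) j : j <= #|R| ->
  exists C : {set T}, C \subset R /\ #|C| = j.
Proof.
move=> hj; exists [set x in take j (enum R)]; split.
  apply/subsetP => x; rewrite inE => /mem_take; by rewrite mem_enum.
have u : uniq (take j (enum R)) by apply: take_uniq; exact: enum_uniq.
have -> : #|[set x in take j (enum R)]| = #|take j (enum R)| by apply: eq_card => x; rewrite inE.
by move/card_uniqP: u => ->; rewrite size_takel // -cardE.
Qed.

Lemma nat_bound (p k : nat) (S X Y : {set 'F_p}) n : 0 < k -> distinct_ksums k S ->
  #|X| = n -> #|Y| = n -> 0 < #|S :&: diffset X Y| ->
  #|S :&: diffset X Y| ^ k < (k.*2) ^ k * n ^ k.+1.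
Proof.
move=> k0 hS Xn Yn m0.
set S' := S :&: diffset X Y.
have n0 : 0 < n.
  case/card_gt0P: m0 => s; rewrite inE => /andP [_ /imset2P [x y xX _ _]].
  by rewrite -Xn; apply/card_gt0P; exists x.
case: (ltnP #|S| k.*2) => hSk.
  have mS : #|S'| < k.*2 by apply: leq_ltn_trans hSk; apply: subset_leq_card; exact: subsetIl.
  apply: (@leq_trans ((k.*2) ^ k)).
    by rewrite ltn_exp2r.
  by rewrite -{1}(muln1 (_ ^ k)) leq_mul2l expn_gt0 n0 orbT.
pose pr (s : 'F_p) : 'F_p * 'F_p :=
  odflt (0%R, 0%R) [pick xy in setX X Y | (xy.1 - xy.2 == s)%R].
have prP : forall s, s \in S' -> pr s \in setX X Y /\ dd (pr s) = s.
  move=> s; rewrite inE => /andP [_ /imset2P [x y xX yY ->]].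
  rewrite /pr; case: pickP => [xy /andP [h1 /eqP h2] | h] /=; first by [].
  by move: (h (x, y)); rewrite inE /= xX yY eqxx.
pose E := pr @: S'.
have ddE : forall e, e \in E -> dd e \in S' /\ pr (dd e) = e.
  by move=> e /imsetP [s sS ->]; have [_ ->] := prP s sS.
have EXY : E \subset setX X Y by apply/subsetP => e /imsetP [s sS ->]; have [] := prP s sS.
have cardE : #|E| = #|S'|.
  apply: card_in_imset => s t sS tS hst.
  by have [_ <-] := prP s sS; have [_ <-] := prP t tS; rewrite hst.
rewrite -cardE; apply: (graph_bound (E := E) _ k0 Xn Yn EXY); last by rewrite cardE.
move=> h c /andP [h2 hk] cE cinj hsum.
have ddS : forall t, t < h.*2 -> dd (c t) \in S.
  by move=> t ht; have [] := ddE _ (cE t ht); rewrite inE => /andP [].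
have ddinj : forall t u, t < h.*2 -> u < h.*2 -> dd (c t) = dd (c u) -> t = u.
  move=> t u ht hu e; apply: cinj => //.
  by have [_ <-] := ddE _ (cE t ht); have [_ <-] := ddE _ (cE u hu); rewrite e.
have lt1 : forall r : 'I_h, r.*2 < h.*2 by move=> r; rewrite ltn_double.
have lt2 : forall r : 'I_h, r.*2.+1 < h.*2 by move=> r; rewrite -doubleS leq_double.
pose A := [set dd (c r.*2) | r : 'I_h].
pose B := [set dd (c r.*2.+1) | r : 'I_h].
have injA : injective (fun r : 'I_h => dd (c r.*2)).
  move=> r r' e; apply: val_inj => /=; apply: double_inj.
  exact: ddinj (lt1 r) (lt1 r') e.
have injB : injective (fun r : 'I_h => dd (c r.*2.+1)).
  move=> r r' e; apply: val_inj => /=; apply: double_inj.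
  by have := ddinj _ _ (lt2 r) (lt2 r') e => -[].
have cA : #|A| = h by rewrite card_imset // card_ord.
have cB : #|B| = h by rewrite card_imset // card_ord.
have dAB : [disjoint A & B].
  apply/pred0P => x /=; apply/negP => /andP [/imsetP [r _ ->] /imsetP [r' _ e]].
  have := ddinj _ _ (lt1 r) (lt2 r') e => /(congr1 odd).
  by rewrite /= !odd_double.
have AS : A \subset S by apply/subsetP => x /imsetP [r _ ->]; exact: ddS.
have BS : B \subset S by apply/subsetP => x /imsetP [r _ ->]; exact: ddS.
have sA : (\sum_(x in A) x = \sum_(r < h) dd (c r.*2))%R.
  by rewrite big_imset //= => r r' _ _; exact: injA.
have sB : (\sum_(x in B) x = \sum_(r < h) dd (c r.*2.+1))%R.
  by rewrite big_imset //= => r r' _ _; exact: injB.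
pose R := S :\: (A :|: B).
have cR : k - h <= #|R|.
  have e : #|S :&: (A :|: B)| + #|R| = #|S| := cardsID _ _.
  have : #|S :&: (A :|: B)| <= h + h.
    apply: leq_trans (subset_leq_card (subsetIr _ _)) _.
    by rewrite cardsU cA cB leq_subr.
  move: hSk hk; rewrite -e -addnn; lia.
case: (sub_card_exists cR) => C [CR cC].
have dAC : [disjoint A & C].
  apply/pred0P => x /=; apply/negP => /andP [xA xC].
  by move: (subsetP CR x xC); rewrite !inE xA.
have dBC : [disjoint B & C].
  apply/pred0P => x /=; apply/negP => /andP [xB xC].
  by move: (subsetP CR x xC); rewrite !inE xB orbT.
have CS : C \subset S by apply: subset_trans CR (subsetDl _ _).
have cU : forall D : {set 'F_p}, [disjoint D & C] -> #|D :|: C| = #|D| + #|C|.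
  by move=> D dD; rewrite cardsU (disjoint_setI0 dD) cards0 subn0.
have sU : forall D : {set 'F_p}, [disjoint D & C] ->
    (\sum_(x in D :|: C) x = \sum_(x in D) x + \sum_(x in C) x)%R.
  move=> D dD; rewrite -bigU //; apply: eq_bigl => x; by rewrite !inE.
have := hS (A :|: C) (B :|: C).
rewrite !subUset AS BS CS !cU // cA cB cC subnKC // sU // sU // sA sB hsum.
move=> /(_ erefl erefl erefl erefl erefl) eqT.
have a0 : 0 < h by lia.
have xA : dd (c (Ordinal a0).*2) \in A by exact: imset_f.
have : dd (c (Ordinal a0).*2) \in A :|: C by rewrite inE xA.
rewrite eqT inE => /orP [xB | xC].
  by rewrite (disjointFr dAB xA) in xB.
by rewrite (disjointFl dAC xC) in xA.
Qed.

Import Order.TTheory.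
Local Open Scope ring_scope.

Theorem theorem7 (R : realType) (p : nat) (alpha : R) (k : nat) (S : {set 'F_p})
  (pp : prime p) (a0 : 0 < alpha) (a1 : alpha <= 1) (k0 : (0 < k)%N)
  (Sne : (0 < #|S|)%N) (hS : distinct_ksums k S) :
  powR (alpha * (#|S|)%:R / (2 * k)%:R) (k%:R / (k.+1)%:R)
    < (bsgs1_complexity S a1)%:R.
Proof.
set C := bsgs1_complexity S a1.
have okC : bsgs1_ok alpha S C by rewrite /C /bsgs1_complexity; case: ex_minnP.
case/existsP: okC => X /existsP [Y /and3P [/eqP XC /eqP YC hm]].
set m := #|S :&: diffset X Y| in hm.
have Spos : 0 < alpha * #|S|%:R by rewrite mulr_gt0 // ltr0n.
have m0 : (0 < m)%N by rewrite -(ltr0n R); apply: lt_le_trans hm.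
have hnat := nat_bound k0 hS XC YC m0.
set b := alpha * #|S|%:R / (2 * k)%:R.
have kR : 0 < (2 * k)%:R :> R by rewrite ltr0n muln_gt0 k0.
have b0 : 0 <= b by rewrite divr_ge0 // ltW.
have bm : b <= m%:R / (2 * k)%:R by rewrite ler_pM2r ?invr_gt0.
have hb : b ^+ k < C%:R ^+ k.+1.
  apply: (@le_lt_trans _ _ ((m%:R / (2 * k)%:R) ^+ k)).
    by rewrite ler_pXn2r // nnegrE // divr_ge0 // ler0n.
  rewrite expr_div_n ltr_pdivrMr ?exprn_gt0 // -!natrX -natrM ltr_nat.
  by rewrite mulnC mul2n.
rewrite ltNge; apply/negP => hle.
have : C%:R ^+ k.+1 <= b ^+ k.
  have -> : b ^+ k = (b `^ (k%:R / k.+1%:R)) ^+ k.+1.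
    rewrite -[RHS]powR_mulrn ?powR_ge0 // -powRrM divfK ?pnatr_eq0 //.
    by rewrite powR_mulrn.
  by rewrite ler_pXn2r // nnegrE ?ler0n ?powR_ge0.
by rewrite leNgt hb.
Qed.
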